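(* Let $\omega\in\mathbb{F}_8$ be a root of $y^3+y+1$, let $m\in\mathbb{N}$, let $\emptyset\neq L\subsetneq[m]$, and let $D=\Delta_L+\omega\Delta_L+\omega^2\Delta_L\subseteq\mathbb{F}_8^m$ and $D^*=D\setminus\{0\}$. Then $C_{D^*}$ is a $1$-weight linear code over $\mathbb{F}_8$ of length $2^{3|L|}-1$, dimension $|L|$ and minimum distance $7\cdot2^{3(|L|-1)}$. In particular it is a minimal code. Moreover, $C_{D^*}$ is a Griesmer code and hence distance optimal. If $A_i$ denotes the number of codewords of weight $i$ and $Z_i=|\{v\in\mathbb{F}_8^m: wt(c_{D^*}(v))=i\}|$ for $0\le i\le|D^*|$, then $Z_0=2^{3(m-|L|)}$ and $Z_i=Z_0A_i$.
   Context: $[m]=\{1,\dots,m\}$; $\Delta_L=\{w\in\mathbb{F}_2^m:\{i:w_i\ne0\}\subseteq L\}$. $A+\omega B+\omega^2C=\{a+\omega b+\omega^2 c: a\in A,b\in B,c\in C\}$. For an ordered finite set $P\subseteq\mathbb{F}_8^m$, $c_P(v)=(v\cdot d)_{d\in P}$ and $C_P=\{c_P(v):v\in\mathbb{F}_8^m\}$. A code is $1$-weight if all nonzero codewords have the same Hamming weight. A nonzero codeword $c$ is minimal if every nonzero codeword $c'$ with $\mathrm{Supp}(c')\subseteq\mathrm{Supp}(c)$ is a scalar multiple of $c$; a minimal code is one all of whose nonzero codewords are minimal. An $[n,k,d]$ code over $\mathbb{F}_q$ is Griesmer if $\sum_{i=0}^{k-1}\lceil d/q^i\rceil=n$; it is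 distance optimal if no $[n,k,d+1]$ linear code over $\mathbb{F}_q$ exists. *)

(* Defs.v *)
From HB Require Import structures.
From mathcomp Require Import all_boot all_order all_algebra all_field.
Set Implicit Arguments. Unset Strict Implicit. Unset Printing Implicit Defensive.
Import GRing.Theory.
Local Open Scope ring_scope.

Section Codes.
Variable F : finFieldType.

(* Delta_L : vectors of F_2^m (entries 0 or 1, seen inside F) supported in L *)
Definition Delta (m : nat) (L : {set 'I_m}) : {set 'rV[F]_m} :=
  [set w : 'rV[F]_m | [forall i : 'I_m,
     ((w 0 i == 0) || (w 0 i == 1)) && ((w 0 i != 0) ==> (i \in L))]].

Definition Dset (m : nat) (om : F) (L : {set 'I_m}) : {set 'rV[F]_m} :=
  [set x : 'rV[F]_m | [exists a in Delta L, exists b in Delta L,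
      exists c in Delta L, x == a + om *: b + om ^+ 2 *: c]].

Definition Dstar (m : nat) (om : F) (L : {set 'I_m}) : {set 'rV[F]_m} :=
  Dset om L :\ 0.

Definition genmatP (m : nat) (P : {set 'rV[F]_m}) : 'M[F]_(m, #|P|) :=
  \matrix_(i < m, j < #|P|) (enum_val (A := P) j) 0 i.

(* c_P(v) = (v . d)_{d in P};  (v *m genmatP P) 0 j = \sum_i v_i d_j i *)
Definition cw (m : nat) (P : {set 'rV[F]_m}) (v : 'rV[F]_m) : 'rV[F]_#|P| :=
  v *m genmatP P.

Definition code (m : nat) (P : {set 'rV[F]_m}) : {set 'rV[F]_#|P|} :=
  [set cw P v | v : 'rV[F]_m].

Definition supp (n : nat) (c : 'rV[F]_n) : {set 'I_n} := [set j | c 0 j != 0].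
Definition hw (n : nat) (c : 'rV[F]_n) : nat := #|supp c|.

Definition lin_code (n : nat) (C : {set 'rV[F]_n}) : Prop :=
  0 \in C /\ forall (a : F) x y, x \in C -> y \in C -> a *: x + y \in C.

Definition one_weight (n : nat) (C : {set 'rV[F]_n}) : Prop :=
  exists w, forall c, c \in C -> c != 0 -> hw c = w.

Definition is_min_dist (n : nat) (C : {set 'rV[F]_n}) (d : nat) : Prop :=
  (exists2 c, c \in C & c != 0 /\ hw c = d) /\
  (forall c, c \in C -> c != 0 -> (d <= hw c)%N).

Definition minimal_cw (n : nat) (C : {set 'rV[F]_n}) (c : 'rV[F]_n) : Prop :=
  c != 0 /\ forall c', c' \in C -> c' != 0 -> supp c' \subset supp c ->
    exists a : F, c' = a *: c.

Definition minimal_code (n : nat) (C : {set 'rV[F]_n}) : Prop :=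
  forall c, c \in C -> c != 0 -> minimal_cw C c.

Definition exists_lin_code (n k d : nat) : Prop :=
  exists G : 'M[F]_(k, n), \rank G = k /\
    is_min_dist [set v *m G | v : 'rV[F]_k] d.

Definition distance_optimal (n k d : nat) : Prop := ~ exists_lin_code n k d.+1.

Definition Acount (n : nat) (C : {set 'rV[F]_n}) (i : nat) : nat :=
  #|[set c in C | hw c == i]|.

Definition Zcount (m : nat) (P : {set 'rV[F]_m}) (i : nat) : nat :=
  #|[set v : 'rV[F]_m | hw (cw P v) == i]|.

End Codes.

Definition ceildiv (a b : nat) : nat := ((a + b.-1) %/ b)%N.

Definition griesmer (q n k d : nat) : Prop :=
  (\sum_(i < k) ceildiv d (q ^ i))%N = n.

(* Main.v *)
Require Import Defs.
From HB Require Import structures.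
From mathcomp Require Import all_boot all_order all_algebra all_field.
From mathcomp Require Import ring zify.
Set Implicit Arguments. Unset Strict Implicit. Unset Printing Implicit Defensive.
Import GRing.Theory.
Local Open Scope ring_scope.

Section Basis.
Variable F : finFieldType.
Hypothesis HF : #|F| = 8%N.
Variable om : F.
Hypothesis Hom : om ^+ 3 + om + 1 = 0.
Lemma char2F : (2%:R : F) = 0.
Proof.
have h : 2%N \in [pchar F] by apply: (@card_finPcharP _ 2 3) => //; rewrite HF.
exact: pcharf0 h.
Qed.
Lemma oppF (x : F) : - x = x.
Proof. by apply/eqP; rewrite eq_sym -subr_eq0 opprK -mulr2n -mulr_natr char2F mulr0. Qed.
Lemma xx (x : F) : x + x = 0.
Proof. by rewrite -mulr2n -mulr_natr char2F mulr0. Qed.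
Lemma one1 : (1 + 1 : F) = 0. Proof. exact: char2F. Qed.
Lemma eqF (x y : F) : x + y = 0 -> x = y.
Proof. by move=> h; rewrite -[y]oppF; apply/eqP; rewrite -addr_eq0 h. Qed.
Lemma om0 : om <> 0.
Proof. by move=> o; move: Hom; rewrite o expr0n /= !add0r; apply/eqP; exact: oner_neq0. Qed.
Lemma om1 : om <> 1.
Proof. by move=> o; move: Hom; rewrite o expr1n one1 add0r; apply/eqP; exact: oner_neq0. Qed.

Definition fb (t : bool * bool * bool) : F :=
  let: (a, b, c) := t in (a%:R + b%:R * om + c%:R * om ^+ 2).

Lemma fb0 t : fb t = 0 -> t = (false, false, false).
Proof.
case: t => [[a b] c]; case: a; case: b; case: c => //= H; exfalso;
  rewrite ?mul0r ?mul1r ?addr0 ?add0r ?add0r in H.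
-
  have e : om ^+ 2 = 1 + om by apply: eqF; rewrite addrC.
  have e3 : om ^+ 3 = 1.
    by rewrite exprS e mulrDr mulr1 -expr2 e addrCA xx addr0.

  by move: Hom; rewrite e3 addrC addrA one1 add0r; apply: om0.
- by apply: om1; apply: eqF; rewrite addrC.
- have e : om ^+ 2 = 1 by apply: eqF; rewrite addrC.
  have e3 : om ^+ 3 = om by rewrite exprS e mulr1.
  by move: Hom; rewrite e3 xx add0r; apply/eqP; exact: oner_neq0.
- by move: H; apply/eqP; exact: oner_neq0.
- have e : om ^+ 2 = om by apply: eqF; rewrite addrC.
  have : om * (om + 1) = 0 by rewrite mulrDr mulr1 -expr2 e xx.
  move/eqP; rewrite mulf_eq0 => /orP [] /eqP o; first exact: om0.
  by apply: om1; apply: eqF.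
- exact: om0.
- by move/eqP: H; rewrite expf_eq0 /= => /eqP; apply: om0.
Qed.

Lemma fb_inj : injective fb.
Proof.
move=> [[a b] c] [[a' b'] c'] /eqP; rewrite -subr_eq0 => /eqP H.
have x (u v : bool) : (u (+) v)%:R = (u%:R - v%:R : F).
  by case: u; case: v => //=; rewrite ?subrr ?subr0 ?sub0r ?oppF.
have : fb (a (+) a', b (+) b', c (+) c') = 0.
  by rewrite -H /fb !x; ring.
by move/fb0; clear H; case: a; case: a'; case: b; case: b'; case: c; case: c'.
Qed.

Lemma fb_onto y : exists t, fb t = y.
Proof.
have : y \in codom fb by apply: inj_card_onto; [exact: fb_inj | rewrite HF !card_prod card_bool].
by case/codomP => t ->; exists t.
Qed.
End Basis.

Section Count.
Variable F : finFieldType.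
Variable m : nat.

Definition suppd (S : {set 'I_m}) : {set 'rV[F]_m} :=
  [set x : 'rV[F]_m | [forall i, (i \notin S) ==> (x 0 i == 0)]].

Lemma card_suppd S : #|suppd S| = (#|F| ^ #|S|)%N.
Proof.
pose phi (f : {ffun 'I_m -> F}) : 'rV[F]_m := \row_i f i.
have phi_inj : injective phi.
  by move=> f1 f2 /rowP e; apply/ffunP => i; have := e i; rewrite !mxE.
have -> : suppd S = phi @: (pffun_on (0 : F) S predT).
  apply/setP => x; rewrite inE; apply/idP/imsetP.
    move/forallP => H; exists [ffun i => x 0 i].
      apply/familyP => i; rewrite ffunE; case: ifP => // iS.
      by rewrite inE; have := H i; rewrite iS /= => /eqP ->.
    by apply/rowP => i; rewrite !mxE ffunE.
  move=> [f /familyP Hf ->]; apply/forallP => i; apply/implyP => iS.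
  by have := Hf i; rewrite (negbTE iS) mxE inE.
rewrite card_imset // card_pffun_on; congr (_ ^ _)%N.
Qed.

Definition dotv (x g : 'rV[F]_m) : F := (x *m g^T) 0 0.

Lemma dotvD x y g : dotv (x + y) g = dotv x g + dotv y g.
Proof. by rewrite /dotv mulmxDl mxE. Qed.
Lemma dotvZ t x g : dotv (t *: x) g = t * dotv x g.
Proof. by rewrite /dotv -scalemxAl mxE. Qed.
Lemma dotv_delta i g : dotv (delta_mx 0 i) g = g 0 i.
Proof. by rewrite /dotv -rowE !mxE. Qed.
Lemma dot0v g : dotv 0 g = 0.
Proof. by rewrite /dotv mul0mx mxE. Qed.

Lemma fiber_count (S : {set 'rV[F]_m}) (g : 'rV[F]_m) (i : 'I_m) :
  g 0 i != 0 -> (forall x t, x \in S -> x + t *: delta_mx 0 i \in S) ->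
  (#|[set x in S | dotv x g != 0%R]| * #|F| = (#|F| - 1) * #|S|)%N.
Proof.
move=> gi0 Scl.
pose N c := #|[set x in S | dotv x g == c]|.
have NE c : N c = N (0:F).
  pose t := - (c / g 0 i).
  pose h (x : 'rV[F]_m) := x + t *: delta_mx 0 i.
  have hinj : injective h by move=> a b /(congr1 (fun z => z - t *: delta_mx 0 i)); rewrite /h !addrK.
  rewrite /N -(card_imset _ hinj); apply: eq_card => y.
  rewrite [in RHS]inE; apply/imsetP/idP.
    move=> [x]; rewrite inE => /andP [xS /eqP xc] ->.
    by rewrite Scl //= dotvD dotvZ dotv_delta xc /t mulNr divfK // subrr.
  move/andP => [yS /eqP y0]; exists (y - t *: delta_mx 0 i).
    by rewrite inE -scaleNr Scl //= dotvD dotvZ dotv_delta y0 add0r /t !mulNr opprK divfK.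
  by rewrite /h subrK.
have part (Q : pred F) : #|[set x in S | Q (dotv x g)]| = (\sum_(c | Q c) N c)%N.
  rewrite -sum1_card (partition_big (fun x => dotv x g) Q) /=; last by move=> x; rewrite inE => /andP [].
  apply: eq_bigr => c Qc; rewrite /N -sum1_card; apply: eq_bigl => x.
  rewrite !inE; case: (x \in S) => //=; case: eqP => [->|]; [by rewrite Qc | by rewrite andbF].
have h1 := part (fun c => c != 0).
have h2 := part predT.
have -> : #|S| = #|[set x in S | predT (dotv x g)]| by apply: eq_card => x; rewrite inE andbT.
rewrite h1 h2 (eq_bigr (fun=> N (0:F))) // [in RHS](eq_bigr (fun=> N (0:F))) //.
rewrite !sum_nat_const cardC1.
by rewrite subn1 -mulnA (mulnC (N _)).
Qed.
End Count.

Lemma card_set_sum (T : finType) (P : pred T) : #|[set x | P x]| = (\sum_x (P x : nat))%N.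
Proof. by rewrite -sum1_card big_mkcond; apply: eq_bigr => x _; rewrite inE; case: (P x). Qed.

Section Gen.
Variable F : finFieldType.

Lemma hw_sum n (c : 'rV[F]_n) : hw c = (\sum_j ((c 0%R j != 0%R) : nat))%N.
Proof. by rewrite /hw /supp card_set_sum. Qed.

Lemma hw_eq0 n (c : 'rV[F]_n) : (hw c == 0)%N = (c == 0).
Proof.
rewrite /hw cards_eq0; apply/eqP/eqP => [H|->].
  apply/rowP => j; rewrite mxE; apply/eqP; apply: contraT => h.
  have : j \in supp c by rewrite inE.
  by rewrite H inE.
by apply/setP => j; rewrite !inE mxE eqxx.
Qed.

Lemma fiber_lin m n (G : 'M[F]_(m, n)) (Q : pred 'rV[F]_n) :
  #|[set v : 'rV[F]_m | Q (v *m G)]| =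
  (#|[set v : 'rV[F]_m | v *m G == 0%R]| * #|[set c in [set v *m G | v : 'rV[F]_m] | Q c]|)%N.
Proof.
rewrite -sum1_card (partition_big (fun v => v *m G) (fun c => (c \in [set v *m G | v : 'rV[F]_m]) && Q c)) /=; last first.
  by move=> v; rewrite inE => Qv; rewrite Qv andbT; apply/imsetP; exists v.
rewrite -[#|[set c in _ | _]|]sum1_card big_distrr /=.
apply: eq_big => [c|c]; first by rewrite inE.
move/andP => [/imsetP [v0 _ ->] Qc]; rewrite muln1 sum1dep_card.
pose h (k : 'rV[F]_m) := k - v0.
have hinj : injective h by move=> a b /(congr1 (fun z => z + v0)); rewrite /h !subrK.
rewrite -(card_imset _ hinj); apply: eq_card => v.
rewrite [in RHS]inE; apply/imsetP/idP.
  by move=> [x]; rewrite inE => /andP [_ /eqP e] ->; rewrite /h mulmxBl e subrr.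
move=> /eqP k0; exists (v + v0); last by rewrite /h addrK.
by rewrite !inE mulmxDl k0 add0r Qc eqxx.
Qed.

Lemma card_rowspace k m (A : 'M[F]_(k, m)) :
  #|[set v : 'rV[F]_m | (v <= A)%MS]| = (#|F| ^ \rank A)%N.
Proof.
pose h (u : 'rV[F]_(\rank A)) := u *m row_base A.
have hinj : injective h.
  move=> a b /eqP; rewrite -subr_eq0 -mulmxBl /h mulmx_free_eq0 ?row_base_free // subr_eq0.
  by move/eqP.
have -> : [set v : 'rV[F]_m | (v <= A)%MS] = h @: setT.
  apply/setP => v; rewrite inE -(eq_row_base A); apply/idP/imsetP.
    by move/submxP => [u ->]; exists u.
  by move=> [u _ ->]; apply/submxP; exists u.
by rewrite card_imset // cardsT card_mx mul1n.
Qed.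

Lemma one_weight_minimal n (C : {set 'rV[F]_n}) :
  lin_code C -> one_weight C -> minimal_code C.
Proof.
move=> [C0 Clin] [w Hw] c cC c0; split => // c' c'C c'0 sub.
have eqs : supp c' = supp c.
  by apply/eqP; rewrite eqEcard sub /= -/(hw c) -/(hw c') Hw // Hw.
have : supp c != set0 by rewrite -cards_eq0 -/(hw c) hw_eq0.
case/set0Pn => j jc; have cj : c 0 j != 0 by rewrite inE in jc.
exists (c' 0 j / c 0 j).
pose c'' := (- (c' 0 j / c 0 j)) *: c + c'.
have c''C : c'' \in C by apply: Clin.
apply/eqP; rewrite -subr_eq0; apply/eqP.
have e : c'' = c' - (c' 0 j / c 0 j) *: c by rewrite /c'' scaleNr addrC.
rewrite -e; apply/eqP; apply: contraT => nz.
have : (hw c'' < hw c)%N.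
  rewrite /hw; apply: proper_card; rewrite properEneq; apply/andP; split.
    apply/eqP => E; move: jc; rewrite -E inE /c'' !mxE mulNr divfK // addNr eqxx.
    by [].
  apply/subsetP => i; rewrite !inE /c'' !mxE; apply: contraR; rewrite negbK => /eqP ci.
  have : c' 0 i = 0.
    apply/eqP; apply: contraT => h.
    have : i \in supp c by rewrite -eqs inE.
    by rewrite inE ci eqxx.
  by move=> ->; rewrite ci mulr0 addr0.
by rewrite (Hw _ c''C nz) Hw // ltnn.
Qed.

Lemma plotkin k n (G : 'M[F]_(k, n)) d : (0 < k)%N ->
  (forall v : 'rV[F]_k, v != 0 -> (d <= hw (v *m G))%N) ->
  ((#|F| ^ k - 1) * d <= n * ((#|F| - 1) * #|F| ^ (k - 1)))%N.
Proof.
move=> k0 Hd.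
have q0 : (0 < #|F|)%N by apply/card_gt0P; exists 0.
have colb j : (#|[set v : 'rV[F]_k | (v *m G) 0%R j != 0%R]| <= (#|F| - 1) * #|F| ^ (k - 1))%N.
  case: (pickP (fun i => G i j != 0)) => [i Gi | none].
    have := @fiber_count F k setT (col j G)^T i.
    rewrite !mxE Gi => /(_ isT) /(_ (fun x t _ => in_setT _)).
    rewrite cardsT card_mx mul1n.
    have -> : (#|F| ^ k = #|F| ^ (k - 1) * #|F|)%N by rewrite -expnSr; congr (_ ^ _)%N; lia.
    rewrite mulnA => /eqP; rewrite eqn_pmul2r // => /eqP <-.
    apply: eq_leq; apply: eq_card => v; rewrite !inE.
    suff -> : dotv v (col j G)^T = (v *m G) 0 j by [].
    by rewrite /dotv trmxK !mxE; apply: eq_bigr => i' _; rewrite !mxE.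
  apply: leq_trans (_ : #|(set0 : {set 'rV[F]_k})| <= _)%N; last by rewrite cards0.
  apply: subset_leq_card; apply/subsetP => v; rewrite inE mxE big1 ?eqxx // => i _.
  by have := none i; move=> /= /negbFE /eqP ->; rewrite mulr0.
have up : (\sum_v hw (v *m G) <= n * ((#|F| - 1) * #|F| ^ (k - 1)))%N.
  rewrite (eq_bigr _ (fun v _ => hw_sum (v *m G))) exchange_big /=.
  rewrite -[in X in (_ <= X * _)%N](card_ord n) -sum_nat_const; apply: leq_sum => j _.
  by rewrite -(card_set_sum (fun v : 'rV[F]_k => (v *m G) 0 j != 0)); exact: colb.
apply: leq_trans up.
rewrite (bigD1 0) //=; apply: leq_trans (leq_addl _ _).
apply: leq_trans (_ : \sum_(v | v != 0%R) d <= _)%N.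
  rewrite sum_nat_cond_const; apply: eq_leq; congr (_ * _)%N.
  have := cardsC1 (0 : 'rV[F]_k); rewrite card_mx mul1n -subn1 => <-.
  by apply: eq_card => v; rewrite !inE.
by apply: leq_sum => v; exact: Hd.
Qed.
End Gen.

Lemma geom_sum l : (7 * \sum_(i < l) 8 ^ i = 8 ^ l - 1)%N.
Proof.
elim: l => [|l IH]; first by rewrite big_ord0.
rewrite big_ord_recr /= mulnDr IH expnS.
have : (1 <= 8 ^ l)%N by rewrite expn_gt0.
lia.
Qed.

Lemma griesmer_ok l : (0 < l)%N -> griesmer 8 (2 ^ (3 * l) - 1) l (7 * 2 ^ (3 * (l - 1))).
Proof.
move=> l0; rewrite /griesmer !expnM (_ : 2 ^ 3 = 8)%N //.
have e i : (i < l)%N -> ceildiv (7 * 8 ^ (l - 1)) (8 ^ i) = (7 * 8 ^ (l - 1 - i))%N.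
  move=> il; rewrite /ceildiv.
  have -> : (7 * 8 ^ (l - 1) = (7 * 8 ^ (l - 1 - i)) * 8 ^ i)%N.
    by rewrite -mulnA -expnD; congr (_ * (_ ^ _))%N; lia.
  rewrite divnMDl ?expn_gt0 // divn_small ?addn0 //.
  have := expn_gt0 8 i; lia.
rewrite (eq_bigr (fun i : 'I_l => 7 * 8 ^ (l - 1 - i)))%N; last by move=> i _; rewrite e.
rewrite -big_distrr /= -geom_sum; congr (_ * _)%N.
rewrite (reindex_inj rev_ord_inj) /=; apply: eq_bigr => i _; congr (_ ^ _)%N.
rewrite /=; have := ltn_ord i; lia.
Qed.


Section Main.
Variable F : finFieldType.
Hypothesis HF : #|F| = 8%N.
Variable om : F.
Hypothesis Hom : om ^+ 3 + om + 1 = 0.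
Variable m : nat.
Variable L : {set 'I_m}.
Hypothesis HL0 : L != set0.

Lemma Dset_eq : Dset om L = suppd F L.
Proof.
apply/setP => x; rewrite !inE; apply/idP/idP.
  case/existsP => a /andP [aD /existsP [b /andP [bD /existsP [c /andP [cD /eqP ->]]]]].
  apply/forallP => i; apply/implyP => iL.
  have z (w : 'rV[F]_m) : w \in Delta F L -> w 0 i = 0.
    rewrite inE => /forallP /(_ i) /andP [_ /implyP H]; apply/eqP; apply: contraT => h.
    by have := H h; rewrite (negbTE iL).
  by rewrite !mxE (z a aD) (z b bD) (z c cD) !mulr0 !addr0.
move/forallP => Hx.
pose tt i := odflt (false,false,false) [pick t | fb om t == x 0 i].
have ttE i : fb om (tt i) = x 0 i.
  rewrite /tt; case: pickP => [t /eqP //| none].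
  by have [t ht] := fb_onto HF Hom (x 0 i); have := none t; rewrite ht eqxx.
pose mk (p : bool * bool * bool -> bool) : 'rV[F]_m :=
  \row_i (if i \in L then ((p (tt i)) : nat)%:R else 0).
have mkD p : mk p \in Delta F L.
  rewrite inE; apply/forallP => i; rewrite mxE; case: (i \in L); case: (p (tt i)) => /=;
  by rewrite ?eqxx ?oner_eq0.
apply/existsP; exists (mk (fun t => t.1.1)); rewrite mkD; apply/existsP; exists (mk (fun t => t.1.2)).
rewrite mkD; apply/existsP; exists (mk (fun t => t.2)); rewrite mkD /=.
apply/eqP/rowP => i; rewrite !mxE; case: ifP => iL.
  by rewrite -ttE; case: (tt i) => [[a b] c] /=; rewrite (mulrC om) (mulrC (om ^+ 2)).
by have := Hx i; rewrite iL /= => /eqP ->; rewrite !mulr0 !addr0.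
Qed.

Let P := Dstar om L.
Let l := #|L|.

Lemma l_gt0 : (0 < l)%N.
Proof. by rewrite /l card_gt0. Qed.

Lemma card_D : #|Dset om L| = (8 ^ l)%N.
Proof. by rewrite Dset_eq card_suppd HF. Qed.

Lemma zero_D : (0 : 'rV[F]_m) \in Dset om L.
Proof. by rewrite Dset_eq inE; apply/forallP => i; rewrite mxE eqxx implybT. Qed.

Lemma card_P : #|P| = (8 ^ l - 1)%N.
Proof. by rewrite /P /Dstar -card_D (cardsD1 0 (Dset om L)) zero_D add1n subn1. Qed.

Lemma cw_entry v j : cw P v 0 j = dotv (enum_val j) v.
Proof. by rewrite /cw /dotv !mxE; apply: eq_bigr => i _; rewrite !mxE mulrC. Qed.

Lemma card_reindex (T : finType) n (f : 'I_n -> T) (A : {set T}) (Q : pred T) :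
  injective f -> (forall x, x \in A -> exists j, f j = x) -> (forall j, f j \in A) ->
  #|[set j | Q (f j)]| = #|[set x in A | Q x]|.
Proof.
move=> finj fsurj fA; rewrite -(card_imset _ finj); apply: eq_card => x.
apply/imsetP/idP.
  by move=> [j]; rewrite inE => Qj ->; rewrite inE fA Qj.
rewrite inE => /andP [xA Qx]; have [j fj] := fsurj x xA; exists j => //.
by rewrite inE fj.
Qed.

Lemma hw_cw v : hw (cw P v) = #|[set x in P | dotv x v != 0]|.
Proof.
rewrite /hw; have -> : supp (cw P v) = [set j | (fun x => dotv x v != 0) (enum_val j)].
  by apply/setP => j; rewrite !inE cw_entry.
apply: (@card_reindex _ #|P| (@enum_val _ P) P (fun x => dotv x v != 0)).
- exact: enum_val_inj.
- by move=> x xP; exists (enum_rank_in xP x); rewrite enum_rankK_in.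
- exact: enum_valP.
Qed.

Definition vL (v : 'rV[F]_m) := [exists i in L, v 0 i != 0].

Lemma dot_zero v x : x \in suppd F L -> ~~ vL v -> dotv x v = 0.
Proof.
rewrite inE => /forallP Hx; rewrite negb_exists => /forallP Hv.
rewrite /dotv mxE big1 // => i _; rewrite mxE.
case iL : (i \in L).
  by have := Hv i; rewrite iL /= negbK => /eqP ->; rewrite mulr0.
by have := Hx i; rewrite iL /= => /eqP ->; rewrite mul0r.
Qed.

Lemma weight v : vL v -> hw (cw P v) = (7 * 8 ^ (l - 1))%N.
Proof.
case/existsP => i /andP [iL vi].
have := @fiber_count F m (Dset om L) v i vi.
have cl x t : x \in Dset om L -> x + t *: delta_mx 0 i \in Dset om L.
  rewrite Dset_eq !inE => /forallP Hx; apply/forallP => k; apply/implyP => kL.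
  have := Hx k; rewrite kL /= => /eqP xk.
  rewrite !mxE xk add0r eqxx /=; have [ki|nki] := eqVneq k i.
    by rewrite ki iL in kL.
  by rewrite mulr0.
move=> /(_ cl); rewrite card_D HF hw_cw.
have -> : [set x in P | dotv x v != 0] = [set x in Dset om L | dotv x v != 0].
  apply/setP => x; rewrite !inE; case: (x =P 0) => [->|] /=; first by rewrite dot0v eqxx andbF.
  by [].
have -> : (8 ^ l = 8 ^ (l - 1) * 8)%N by rewrite -expnSr; congr (_ ^ _)%N; have := l_gt0; lia.
by rewrite (subn1 8) /= mulnA => /eqP; rewrite eqn_pmul2r // => /eqP.
Qed.

Lemma d_pos : (0 < 7 * 8 ^ (l - 1))%N.
Proof. by rewrite muln_gt0 expn_gt0. Qed.

Lemma cw_eq0 v : (cw P v == 0) = ~~ vL v.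
Proof.
case H : (vL v) => /=.
  by rewrite -hw_eq0 weight // eqn0Ngt d_pos.
apply/eqP/rowP => j; rewrite cw_entry mxE dot_zero ?H //.
by rewrite -Dset_eq; have := enum_valP j; rewrite /P /Dstar inE => /andP [].
Qed.

Lemma card_K : #|[set v : 'rV[F]_m | cw P v == 0]| = (8 ^ (m - l))%N.
Proof.
have -> : [set v : 'rV[F]_m | cw P v == 0] = suppd F (~: L).
  apply/setP => v; rewrite !inE cw_eq0 negb_exists; apply/forallP/forallP => H i;
  have := H i; rewrite inE negbK; by case: (i \in L) => //= /negPn.
rewrite card_suppd HF; congr (_ ^ _)%N.
by have := cardsC L; rewrite card_ord /l; lia.
Qed.

Lemma rank_G : \rank (genmatP P) = l.
Proof.
have := card_rowspace (kermx (genmatP P)).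
have -> : [set v : 'rV[F]_m | (v <= kermx (genmatP P))%MS] = [set v : 'rV[F]_m | cw P v == 0].
  by apply/setP => v; rewrite !inE sub_kermx.
rewrite card_K mxrank_ker HF => /eqP; rewrite eqn_exp2l // => /eqP.
have := rank_leq_row (genmatP P); have : (l <= m)%N by rewrite /l; have := max_card (mem L); rewrite card_ord.
lia.
Qed.

End Main.


Theorem mainTheorem4 (F : finFieldType) (HF : #|F| = 8%N)
  (om : F) (Hom : om ^+ 3 + om + 1 = 0)
  (m : nat) (L : {set 'I_m}) (HL0 : L != set0) (HL1 : L != setT) :
  let P := Dstar om L in
  let C := code P in
  let l := #|L| in
  let d := (7 * 2 ^ (3 * (l - 1)))%N in
  lin_code C /\ one_weight C /\
  #|P| = (2 ^ (3 * l) - 1)%N /\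
  \rank (genmatP P) = l /\
  is_min_dist C d /\
  minimal_code C /\
  griesmer 8 #|P| l d /\
  distance_optimal F #|P| l d /\
  (Zcount P 0 = (2 ^ (3 * (m - l)))%N /\
      (forall i, (i <= #|P|)%N -> Zcount P i = (Zcount P 0 * Acount C i)%N)).
Proof.
move=> P C l d.
have ed : d = (7 * 8 ^ (l - 1))%N by rewrite /d expnM.
have lin : lin_code C.
  split; first by apply/imsetP; exists 0 => //; rewrite /cw mul0mx.
  move=> a x y /imsetP [v _ ->] /imsetP [w _ ->]; apply/imsetP; exists (a *: v + w) => //.
  by rewrite /cw mulmxDl scalemxAl.
have ow : forall c, c \in C -> c != 0 -> hw c = d.
  move=> c /imsetP [v _ ->] nz; rewrite ed; apply: (weight HF Hom HL0).
  by move: nz; rewrite (cw_eq0 HF Hom HL0) negbK.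
have l0 : (0 < l)%N by rewrite /l card_gt0.
have cP : #|P| = (8 ^ l - 1)%N by apply: (card_P HF Hom).
split; first exact: lin.
split; first by exists d.
split; first by rewrite cP expnM.
split; first exact: (rank_G HF Hom HL0).
split.
  split; last by move=> c cC nz; rewrite ow.
  have [i iL] := set0Pn _ HL0.
  exists (cw P (delta_mx 0 i)); first by apply/imsetP; exists (delta_mx 0 i).
  have vi : vL L (delta_mx 0 i : 'rV[F]_m).
    by rewrite /vL; apply/existsP; exists i; rewrite iL !mxE !eqxx oner_eq0.
  split; first by rewrite (cw_eq0 HF Hom HL0) vi.
  by rewrite ed; apply: (weight HF Hom HL0).
split; first by apply: one_weight_minimal => //; exists d.
have cP' : #|P| = (2 ^ (3 * l) - 1)%N by rewrite cP expnM.
split; first by rewrite cP' /d; exact: griesmer_ok.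
split.
  move=> [G [rk [_ Hmin]]].
  have := @plotkin F l #|P| G d.+1 l0.
  have Hv : forall v : 'rV[F]_l, v != 0 -> (d.+1 <= hw (v *m G))%N.
    move=> v nz; apply: Hmin; first by apply/imsetP; exists v.
    by rewrite mulmx_free_eq0 // /row_free rk.
  move=> /(_ Hv); rewrite cP HF ed.
  have p0 : (0 < 8 ^ l - 1)%N.
    have : (8 <= 8 ^ l)%N by rewrite -{1}(expn1 8) leq_pexp2l.
    lia.
  by rewrite (subn1 8) /= leq_pmul2l // ltnn.
have Z0 : Zcount P 0 = #|[set v : 'rV[F]_m | cw P v == 0]|.
  by apply: eq_card => v; rewrite !inE hw_eq0.
split.
  by rewrite Z0 (card_K HF Hom HL0) expnM.
move=> i _; rewrite Z0 /Zcount /Acount.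
exact: (fiber_lin (genmatP P) (fun c => hw c == i)).
Qed.
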